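(* Let $m \ge 2$ be a natural number and let $\tilde{\boldsymbol{\theta}}^m$ be a finite nonempty dataset of angles that has period $2\pi/m$. Then for every natural number $p$: $$\nu_p(\tilde{\boldsymbol{\theta}}^m) = 1 \quad \text{if } p \le m-1, \qquad 0 \le \nu_p(\tilde{\boldsymbol{\theta}}^m) \le 1 \quad \text{if } p = m.$$
   Context: A dataset of angles is a finite nonempty multiset $\boldsymbol{\theta} = \{\theta_j \mid j = 1, \dots, N\}$ of real numbers (angles in radians). For $p \in \mathbb{N} = \{1,2,\dots\}$, the $p$th angular variance is $\nu_p(\boldsymbol{\theta}) = 1 - \bar{R}_p$, where $\bar{R}_p = \sqrt{\bar{C}_p^2 + \bar{S}_p^2}$, $\bar{C}_p = \frac{1}{N}\sum_{j=1}^N \cos(p\theta_j)$, $\bar{S}_p = \frac{1}{N}\sum_{j=1}^N \sin(p\theta_j)$. A dataset has period $2\pi/m$ if, as a multiset of angles modulo $2\pi$, it is invariant under the rotation $\theta \mapsto \theta + 2\pi/m$. *)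

(* Defs.v *)
From Stdlib Require Import Reals List Permutation ZArith.
Open Scope R_scope.
Import ListNotations.

(* A dataset of angles is a finite nonempty multiset, represented as a
   nonempty list of reals (order irrelevant for all notions below). *)

Definition sumR (l : list R) : R := fold_right Rplus 0 l.

Definition Cbar (p : nat) (th : list R) : R :=
  sumR (map (fun t => cos (INR p * t)) th) / INR (length th).

Definition Sbar (p : nat) (th : list R) : R :=
  sumR (map (fun t => sin (INR p * t)) th) / INR (length th).

Definition Rbar (p : nat) (th : list R) : R :=
  sqrt (Cbar p th ^ 2 + Sbar p th ^ 2).

Definition nu (p : nat) (th : list R) : R := 1 - Rbar p th.

Definition cong2pi (x y : R) : Prop := exists k : Z, x - y = 2 * PI * IZR k.

Definition eq_mod2pi (l1 l2 : list R) : Prop :=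
  exists l2', Permutation l2 l2' /\ Forall2 cong2pi l1 l2'.

Definition has_period (m : nat) (th : list R) : Prop :=
  eq_mod2pi (map (fun t => t + 2 * PI / INR m) th) th.

(* Main.v *)
Require Import Defs.
From Stdlib Require Import Reals List Lra Lia Psatz Permutation ZArith.
Open Scope R_scope.

Lemma sumR_perm (l1 l2 : list R) : Permutation l1 l2 -> sumR l1 = sumR l2.
Proof. induction 1; simpl; lra. Qed.

Lemma sumR_lin (f g : R -> R) (a b : R) (l : list R) :
  sumR (map (fun t => a * f t + b * g t) l) = a * sumR (map f l) + b * sumR (map g l).
Proof. induction l; simpl; [lra|rewrite IHl; ring]. Qed.

Lemma trig_int (n : Z) : cos (2 * PI * IZR n) = 1 /\ sin (2 * PI * IZR n) = 0.
Proof.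
  assert (hs : sin (IZR n * PI) = 0) by (apply sin_eq_0_1; eauto).
  split.
  - replace (2 * PI * IZR n) with (2 * (IZR n * PI)) by ring.
    rewrite cos_2a_sin, hs; ring.
  - apply sin_eq_0_1. exists (2 * n)%Z. rewrite mult_IZR. simpl. ring.
Qed.

Lemma cong_p (p : nat) x y : cong2pi x y ->
  cos (INR p * x) = cos (INR p * y) /\ sin (INR p * x) = sin (INR p * y).
Proof.
  intros [k hk].
  assert (e : INR p * x = INR p * y + 2 * PI * IZR (Z.of_nat p * k)).
  { rewrite mult_IZR, <- INR_IZR_INZ. replace x with (y + 2*PI*IZR k) by lra. ring. }
  destruct (trig_int (Z.of_nat p * k)) as [c s].
  rewrite e, cos_plus, sin_plus, c, s. split; ring.
Qed.

Lemma forall2_sum (p : nat) l1 l2 : Forall2 cong2pi l1 l2 ->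
  sumR (map (fun t => cos (INR p * t)) l1) = sumR (map (fun t => cos (INR p * t)) l2) /\
  sumR (map (fun t => sin (INR p * t)) l1) = sumR (map (fun t => sin (INR p * t)) l2).
Proof.
  induction 1; simpl; [lra|].
  destruct (cong_p p _ _ H) as [c s]. destruct IHForall2. split; lra.
Qed.

Lemma sum_bound (p : nat) (l : list R) :
  let C := sumR (map (fun t => cos (INR p * t)) l) in
  let S := sumR (map (fun t => sin (INR p * t)) l) in
  C^2 + S^2 <= INR (length l) ^ 2.
Proof.
  induction l as [|t l IH]; simpl in *; [lra|].
  set (C := sumR (map (fun t => cos (INR p * t)) l)) in *.
  set (S := sumR (map (fun t => sin (INR p * t)) l)) in *.
  set (n := INR (length l)) in *.
  assert (hn : 0 <= n) by apply pos_INR.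
  assert (e1 : sin (INR p * t) ^ 2 + cos (INR p * t) ^ 2 = 1).
  { rewrite <- (sin2_cos2 (INR p * t)). unfold Rsqr. ring. }
  set (c := cos (INR p * t)) in *. set (s := sin (INR p * t)) in *.
  assert (hx : c * C + s * S <= n).
  { destruct (Rle_lt_dec (c*C + s*S) 0) as [h|h]; [lra|].
    assert (hl : (c*C+s*S)^2 + (c*S - s*C)^2 = (C^2+S^2)*(s^2+c^2)) by ring.
    rewrite e1, Rmult_1_r in hl.
    assert ((c*C+s*S)^2 <= n^2) by (pose proof (pow2_ge_0 (c*S - s*C)); lra).
    nra. }
  replace (match length l with 0%nat => 1 | Datatypes.S _ => n + 1 end) with (n+1) by (unfold n; destruct (length l); simpl; lra). nra.
Qed.

Theorem theorem1 (m : nat) (th : list R) :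
  (2 <= m)%nat -> th <> nil -> has_period m th ->
  (forall p : nat, (1 <= p)%nat -> (p <= m - 1)%nat -> nu p th = 1) /\
  (0 <= nu m th <= 1).
Proof.
  intros hm hne hper.
  assert (hN : 0 < INR (length th)).
  { destruct th; [congruence|]. simpl length. apply lt_0_INR. lia. }
  split.
  - intros p hp1 hp2.
    destruct hper as [l2 [hperm hf]].
    destruct (forall2_sum p _ _ hf) as [ec es].
    rewrite !map_map in ec, es.
    rewrite <- (sumR_perm _ _ (Permutation_map _ hperm)) in ec.
    rewrite <- (sumR_perm _ _ (Permutation_map _ hperm)) in es.
    set (b := INR p * (2 * PI / INR m)).
    assert (ec' : sumR (map (fun t => cos b * cos (INR p * t) + (- sin b) * sin (INR p * t)) th)
                  = sumR (map (fun t => cos (INR p * t)) th)).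
    { rewrite <- ec. f_equal. apply map_ext. intro t.
      unfold b. rewrite Rmult_plus_distr_l, cos_plus. ring. }
    assert (es' : sumR (map (fun t => cos b * sin (INR p * t) + sin b * cos (INR p * t)) th)
                  = sumR (map (fun t => sin (INR p * t)) th)).
    { rewrite <- es. f_equal. apply map_ext. intro t.
      unfold b. rewrite Rmult_plus_distr_l, sin_plus. ring. }
    rewrite sumR_lin in ec', es'.
    set (C := sumR (map (fun t => cos (INR p * t)) th)) in *.
    set (S := sumR (map (fun t => sin (INR p * t)) th)) in *.
    assert (hmpos : 0 < INR m) by (apply lt_0_INR; lia).
    assert (hpm : INR p < INR m) by (apply lt_INR; lia).
    assert (hp0 : 1 <= INR p) by (apply (le_INR 1); lia).
    assert (hsb : 0 < sin (b/2)).
    { apply sin_gt_0; unfold b.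
      - apply Rdiv_lt_0_compat; [|lra]. apply Rmult_lt_0_compat; [lra|].
        apply Rdiv_lt_0_compat; [pose PI_RGT_0; lra|lra].
      - replace (INR p * (2 * PI / INR m) / 2) with (PI * (INR p / INR m)) by (field; lra).
        pose PI_RGT_0. assert (INR p / INR m < 1).
        { apply (Rmult_lt_reg_r (INR m)); [lra|]. field_simplify; lra. }
        nra. }
    assert (hcb : cos b = 1 - 2 * sin (b/2) * sin (b/2)).
    { rewrite <- cos_2a_sin. f_equal. field. }
    assert (hsc : sin b ^ 2 + cos b ^ 2 = 1).
    { rewrite <- (sin2_cos2 b). unfold Rsqr. ring. }
    assert (h1c : 0 < 1 - cos b) by nra.
    assert (hC : C = 0 /\ S = 0).
    { assert (e1 : (1 - cos b) * C = - sin b * S) by lra.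
      assert (e2 : (1 - cos b) * S = sin b * C) by lra.
      assert (hz1 : ((1 - cos b)^2 + sin b^2) * C = 0).
      { replace (((1 - cos b)^2 + sin b^2) * C) with ((1 - cos b) * ((1 - cos b) * C) + sin b * (sin b * C)) by ring.
        rewrite e1, <- e2. ring. }
      assert (hz2 : ((1 - cos b)^2 + sin b^2) * S = 0).
      { replace (((1 - cos b)^2 + sin b^2) * S) with ((1 - cos b) * ((1 - cos b) * S) - sin b * (- sin b * S)) by ring.
        rewrite e2, <- e1. ring. }
      assert (hpos : 0 < (1 - cos b)^2 + sin b^2) by nra.
      split.
      + destruct (Rmult_integral _ _ hz1); [lra|auto].
      + destruct (Rmult_integral _ _ hz2); [lra|auto]. }
    destruct hC as [hC hS].
    unfold nu, Rbar, Cbar, Sbar. fold C S. rewrite hC, hS.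
    replace ((0 / INR (length th)) ^ 2 + (0 / INR (length th)) ^ 2) with 0 by (field; lra).
    rewrite sqrt_0. ring.
  - unfold nu, Rbar, Cbar, Sbar.
    pose proof (sum_bound m th) as hb. simpl in hb.
    set (C := sumR (map (fun t => cos (INR m * t)) th)) in *.
    set (S := sumR (map (fun t => sin (INR m * t)) th)) in *.
    set (N := INR (length th)) in *.
    assert (hq : (C / N) ^ 2 + (S / N) ^ 2 <= 1).
    { unfold Rdiv. set (u := / N).
      assert (N * u = 1) by (unfold u; field; lra).
      assert (0 < u) by (unfold u; apply Rinv_0_lt_compat; lra).
      assert ((C*u)^2 + (S*u)^2 = u^2 * (C^2+S^2)) by ring.
      assert (u^2 * (C^2+S^2) <= u^2 * N^2).
      { apply Rmult_le_compat_l; nra. }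
      nra. }
    pose proof (sqrt_pos ((C / N) ^ 2 + (S / N) ^ 2)).
    pose proof (sqrt_le_1_alt _ _ hq). rewrite sqrt_1 in *. lra.
Qed.
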